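(* Let $\mathbb F\subseteq\mathbb D$ be a finite subset of local height $n$. Then for all Banach spaces $X,Y$ and all bounded linear operators $T:X\to Y$, $$\tau(T|\mathcal H(\mathbb F))\le\tau(T|\mathcal H(\mathbb D_1^n)).$$
   Context: Dyadic intervals: $\Delta_k^{(j)}:=[\frac{j-1}{2^k},\frac{j}{2^k})$ for $k\ge0$ (so $\Delta_0^{(1)}=[0,1)$). Haar functions: for $k\ge1$, integer $j$, $\chi_k^{(j)}(t)=+2^{(k-1)/2}$ on $\Delta_k^{(2j-1)}$, $-2^{(k-1)/2}$ on $\Delta_k^{(2j)}$, $0$ otherwise, $t\in[0,1)$. Dyadic tree $\mathbb D:=\{(k,j):k=1,2,\dots;\ j=1,\dots,2^{k-1}\}$; $\mathbb D_m^n:=\{(k,j):k=m,\dots,n;\ j=1,\dots,2^{k-1}\}$. Branches: for $t\in[0,1)$, $\mathbb B(t):=\{(k,j)\in\mathbb D: t\in\Delta_{k-1}^{(j)}\}$. Local height of finite $\mathbb F\subseteq\mathbb D$: $\mathrm{lh}(\mathbb F):=\max_{t\in[0,1)}|\mathbb F\cap\mathbb B(t)|$. For finite $\mathbb F\subseteq\mathbb D$ and bounded linear $T:X\to Y$, $\tau(T|\mathcal H(\mathbb F))$ is the least $c\ge0$ such that $\|\sum_{(k,j)\in\mathbb F}Tx_k^{(j)}\chi_k^{(j)}|L_2\|\le c(\sum_{(k,j)\in\mathbb F}\|x_k^{(j)}\|^2)^{1/2}$ for all $x_k^{(j)}\in X$, where $\|\cdot|L_2\|$ is the Bochner $L_2([0,1),Y)$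 norm. *)

(* Defs.v *)
From HB Require Import structures.
From mathcomp Require Import all_boot all_order all_algebra.
From mathcomp Require Import all_classical all_reals all_analysis.
Set Implicit Arguments. Unset Strict Implicit. Unset Printing Implicit Defensive.
Import Order.TTheory GRing.Theory Num.Theory numFieldNormedType.Exports.
Local Open Scope classical_set_scope.
Local Open Scope ring_scope.

Section Haar.
Variable R : realType.

Definition in_dyadic (k j : nat) (t : R) : bool :=
  ((j%:R - 1) / 2 ^+ k <= t) && (t < j%:R / 2 ^+ k).

Definition haar (k j : nat) (t : R) : R :=
  if in_dyadic k (2 * j - 1) t then Num.sqrt (2 ^+ (k - 1))
  else if in_dyadic k (2 * j) t then - Num.sqrt (2 ^+ (k - 1))
  else 0.

Definition inD (p : nat * nat) : bool := (1 <= p.1)%N && (1 <= p.2 <= 2 ^ (p.1 - 1))%N.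

Definition Dmn (m n : nat) : seq (nat * nat) :=
  flatten [seq [seq (k, j) | j <- iota 1 (2 ^ (k - 1))] | k <- iota m (n.+1 - m)].

Definition in_branch (t : R) (p : nat * nat) : bool := inD p && in_dyadic (p.1 - 1) p.2 t.

(* lh(F) = n  (F a finite subset of D given as a duplicate-free list) *)
Definition local_height_eq (F : seq (nat * nat)) (n : nat) : Prop :=
  (exists2 t : R, 0 <= t < 1 & count (in_branch t) F = n) /\
  (forall t : R, 0 <= t < 1 -> (count (in_branch t) F <= n)%N).

Definition L2norm (Y : normedModType R) (f : R -> Y) : R :=
  Num.sqrt (fine (\int[@lebesgue_measure R]_(t in `[0%R, 1%R[) ((`|f t| ^+ 2)%:E))%E).

Definition haar_sum (X Y : normedModType R) (T : X -> Y) (F : seq (nat * nat))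
  (x : nat * nat -> X) : R -> Y :=
  fun t => \sum_(p <- F) haar p.1 p.2 t *: T (x p).

Definition tau_admissible (X Y : normedModType R) (T : X -> Y) (F : seq (nat * nat))
  (c : R) : Prop :=
  0 <= c /\ forall x : nat * nat -> X,
    L2norm (haar_sum T F x) <= c * Num.sqrt (\sum_(p <- F) `|x p| ^+ 2).

Definition tau (X Y : normedModType R) (T : X -> Y) (F : seq (nat * nat)) : \bar R :=
  ereal_inf [set c%:E | c in tau_admissible T F].

End Haar.

(* Main.v *)
Require Import Defs.
From HB Require Import structures.
From mathcomp Require Import all_boot all_order all_algebra.
From mathcomp Require Import all_classical all_reals all_analysis.
From mathcomp Require Import ring lra zify.
Import Order.TTheory GRing.Theory Num.Theory numFieldNormedType.Exports.
Local Open Scope ring_scope.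
Set Implicit Arguments. Unset Strict Implicit. Unset Printing Implicit Defensive.

Section Part1.


Section Reals.
Variable R : realType.

Lemma two_pow_gt0 (k : nat) : 0 < (2 : R) ^+ k.
Proof. by rewrite exprn_gt0. Qed.

Lemma atom_le (N a i : nat) (t : R) :
  i%:R / 2 ^+ N <= t -> t < i.+1%:R / 2 ^+ N ->
  (a%:R / 2 ^+ N <= t) = (a <= i)%N.
Proof.
move=> h1 h2; have p := two_pow_gt0 N.
apply/idP/idP => h.
  have : a%:R / 2 ^+ N < i.+1%:R / 2 ^+ N :> R by apply: le_lt_trans h2.
  by rewrite ltr_pM2r ?invr_gt0 // ltr_nat ltnS.
by apply: le_trans h1; rewrite ler_pM2r ?invr_gt0 // ler_nat.
Qed.

Lemma atom_lt (N a i : nat) (t : R) :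
  i%:R / 2 ^+ N <= t -> t < i.+1%:R / 2 ^+ N ->
  (t < a%:R / 2 ^+ N) = (i < a)%N.
Proof.
move=> h1 h2; have p := two_pow_gt0 N.
apply/idP/idP => h.
  have : i%:R / 2 ^+ N < a%:R / 2 ^+ N :> R by apply: le_lt_trans h.
  by rewrite ltr_pM2r ?invr_gt0 // ltr_nat.
by apply: (lt_le_trans h2); rewrite ler_pM2r ?invr_gt0 // ler_nat.
Qed.

Lemma div_pow_split (a k N : nat) : (k <= N)%N ->
  a%:R / 2 ^+ k = (a * 2 ^ (N - k))%:R / 2 ^+ N :> R.
Proof.
move=> kN; rewrite natrM natrX -{2}(subnKC kN) exprD.
have p1 := two_pow_gt0 k; have p2 := two_pow_gt0 (N - k).
by field; rewrite ?gt_eqF.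
Qed.

Lemma in_dyadic_atom (N k m i : nat) (t : R) : (k <= N)%N ->
  i%:R / 2 ^+ N <= t -> t < i.+1%:R / 2 ^+ N ->
  in_dyadic k m t = ((m.-1 * 2 ^ (N - k) <= i) && (i < m * 2 ^ (N - k)))%N.
Proof.
move=> kN h1 h2; rewrite /in_dyadic.
have t0 : 0 <= t by apply: le_trans h1; rewrite divr_ge0 // ltW // two_pow_gt0.
case: m => [|m].
  rewrite mul0n ltn0 andbF; apply/negbTE; rewrite negb_and; apply/orP; right.
  by rewrite -leNgt mul0r.
have -> : m.+1%:R - 1 = m%:R :> R by rewrite -natr1 addrK.
rewrite (div_pow_split m kN) (div_pow_split m.+1 kN) /=.
by rewrite (atom_le _ h1 h2) (atom_lt _ h1 h2).
Qed.

Lemma atom_self (N i : nat) : (i%:R / 2 ^+ N <= i%:R / 2 ^+ N :> R) /\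
  (i%:R / 2 ^+ N < i.+1%:R / 2 ^+ N :> R).
Proof.
split => //; rewrite ltr_pM2r ?invr_gt0 ?two_pow_gt0 // ltr_nat //.
Qed.

Lemma in_dyadic_const (N k m i : nat) (t : R) : (k <= N)%N ->
  i%:R / 2 ^+ N <= t -> t < i.+1%:R / 2 ^+ N ->
  in_dyadic k m t = in_dyadic k m (i%:R / 2 ^+ N : R).
Proof.
move=> kN h1 h2; have [a1 a2] := @atom_self N i.
by rewrite (in_dyadic_atom m kN h1 h2) (in_dyadic_atom m kN a1 a2).
Qed.

Lemma haar_const (N k j i : nat) (t : R) : (k <= N)%N ->
  i%:R / 2 ^+ N <= t -> t < i.+1%:R / 2 ^+ N ->
  haar k j t = haar k j (i%:R / 2 ^+ N : R).
Proof.
by move=> kN h1 h2; rewrite /haar !(in_dyadic_const _ kN h1 h2).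
Qed.

End Reals.

End Part1.

Section Part2.


Section Resc.
Variable R : realType.

Lemma half_le (x y : R) : (x / 2 <= y / 2) = (x <= y).
Proof. by rewrite ler_pM2r ?invr_gt0. Qed.
Lemma half_lt (x y : R) : (x / 2 < y / 2) = (x < y).
Proof. by rewrite ltr_pM2r ?invr_gt0. Qed.

Lemma in_dyadic_half (k m : nat) (s : R) :
  in_dyadic k.+1 m (s / 2) = in_dyadic k m s.
Proof.
rewrite /in_dyadic; have p := two_pow_gt0 R k.
have e : forall a : R, a / 2 ^+ k.+1 = (a / 2 ^+ k) / 2.
  by move=> a; rewrite exprS; field; rewrite gt_eqF.
by rewrite !e half_le half_lt.
Qed.

Lemma in_dyadic_half1 (k m : nat) (s : R) :
  in_dyadic k.+1 (m + 2 ^ k) ((s + 1) / 2) = in_dyadic k m s.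
Proof.
rewrite /in_dyadic; have p := two_pow_gt0 R k.
have e1 : ((m + 2 ^ k)%:R - 1) / 2 ^+ k.+1 = ((m%:R - 1) / 2 ^+ k + 1) / 2 :> R.
  by rewrite natrD natrX exprS; field; rewrite gt_eqF.
have e2 : ((m + 2 ^ k)%:R) / 2 ^+ k.+1 = ((m%:R) / 2 ^+ k + 1) / 2 :> R.
  by rewrite natrD natrX exprS; field; rewrite gt_eqF.
by rewrite e1 e2 half_le half_lt lerD2r ltrD2r.
Qed.

Lemma in_dyadic_big (k m : nat) (s : R) : (2 ^ k < m)%N -> s < 1 ->
  in_dyadic k m s = false.
Proof.
move=> km s1; rewrite /in_dyadic; have p := two_pow_gt0 R k.
apply/negbTE; rewrite negb_and -ltNge; apply/orP; left.
apply: (lt_le_trans s1); rewrite ler_pdivlMr // mul1r.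
have : (2 ^ k).+1%:R <= m%:R :> R by rewrite ler_nat.
by rewrite -natr1 natrX; lra.
Qed.

Lemma in_dyadic_small1 (k m : nat) (s : R) : (m <= 2 ^ k)%N -> 0 <= s ->
  in_dyadic k.+1 m ((s + 1) / 2) = false.
Proof.
move=> km s0; rewrite /in_dyadic; have p := two_pow_gt0 R k.
apply/negbTE; rewrite negb_and -leNgt; apply/orP; right.
have e : m%:R / 2 ^+ k.+1 = (m%:R / 2 ^+ k) / 2 :> R.
  by rewrite exprS; field; rewrite gt_eqF.
rewrite e half_le.
have : m%:R / 2 ^+ k <= 1 :> R.
  by rewrite ler_pdivrMr // mul1r -natrX ler_nat.
lra.
Qed.

Lemma sqrt_pow_succ (k : nat) : Num.sqrt (2 ^+ k.+1 : R) = Num.sqrt 2 * Num.sqrt (2 ^+ k).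
Proof. by rewrite exprS sqrtrM. Qed.

Lemma haar_half (k j : nat) (s : R) :
  haar k.+2 j (s / 2) = Num.sqrt 2 * haar k.+1 j s.
Proof.
rewrite /haar !in_dyadic_half !subSS !subn0 sqrt_pow_succ.
by case: ifP => _; [|case: ifP => _]; rewrite ?mulrN ?mulr0.
Qed.

Lemma haar_half1 (k j : nat) (s : R) : (1 <= j)%N ->
  haar k.+2 (j + 2 ^ k) ((s + 1) / 2) = Num.sqrt 2 * haar k.+1 j s.
Proof.
move=> j1.
have e1 : (2 * (j + 2 ^ k) - 1 = (2 * j - 1) + 2 ^ k.+1)%N.
  rewrite expnS; lia.
have e2 : (2 * (j + 2 ^ k) = (2 * j) + 2 ^ k.+1)%N.
  rewrite expnS; lia.
rewrite /haar e1 e2 !in_dyadic_half1 !subSS !subn0 sqrt_pow_succ.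
by case: ifP => _; [|case: ifP => _]; rewrite ?mulrN ?mulr0.
Qed.

Lemma haar11_half (s : R) : 0 <= s < 1 -> haar 1 1 (s / 2) = 1.
Proof.
move=> /andP[s0 s1]; rewrite /haar /in_dyadic /= expr1 expr0 sqrtr1.
have -> : (1%:R - 1 : R) = 0 by rewrite subrr.
rewrite mul0r divr_ge0 //= half_lt //.
by rewrite (_ : (2 * 1 - 1)%:R = 1 :> R) // s1.
Qed.

Lemma haar11_half1 (s : R) : 0 <= s < 1 -> haar 1 1 ((s + 1) / 2) = -1.
Proof.
move=> /andP[s0 s1]; rewrite /haar /in_dyadic /= expr1 expr0 sqrtr1.
have -> : (1%:R - 1 : R) = 0 by rewrite subrr.
have -> : (2%:R - 1 : R) = 1 by rewrite -natr1 addrK.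
rewrite mul0r mul1r (_ : (2 * 1)%:R / 2 = 1 :> R); last by rewrite divff.
have -> : ((s + 1) / 2 < 2^-1) = false.
  by apply/negbTE; rewrite -leNgt -[X in X <= _]mul1r half_le; lra.
have -> : (2^-1 <= (s + 1) / 2) by rewrite -[X in X <= _]mul1r half_le; lra.
have -> : ((s + 1) / 2 < 1) by lra.
by rewrite andbF.
Qed.

Lemma haar_big (k j : nat) (s : R) : (2 ^ k < j)%N -> s < 1 ->
  haar k.+1 j s = 0.
Proof.
move=> kj s1; rewrite /haar !in_dyadic_big //; rewrite expnS; lia.
Qed.

Lemma haar_small1 (k j : nat) (s : R) : (j <= 2 ^ k)%N -> 0 <= s ->
  haar k.+2 j ((s + 1) / 2) = 0.
Proof.
move=> kj s0; rewrite /haar !in_dyadic_small1 //; rewrite expnS; lia.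
Qed.

End Resc.

End Part2.

Section Part3.
Local Open Scope nat_scope.


Definition PL (p : nat * nat) : bool := (1 < p.1)%N && (p.2 <= 2 ^ (p.1 - 2))%N.
Definition PR (p : nat * nat) : bool := (1 < p.1)%N && (2 ^ (p.1 - 2) < p.2)%N.
Definition Lmap (p : nat * nat) : nat * nat := (p.1.-1, p.2).
Definition Rmap (p : nat * nat) : nat * nat := (p.1.-1, p.2 - 2 ^ (p.1 - 2)).
Definition LF (F : seq (nat * nat)) := map Lmap [seq p <- F | PL p].
Definition RF (F : seq (nat * nat)) := map Rmap [seq p <- F | PR p].

Section BigSplit.
Variables (V : Type) (idx : V) (op : Monoid.com_law idx).

Lemma split3 (F : seq (nat * nat)) (f : nat * nat -> V) : all inD F ->
  \big[op/idx]_(p <- F) f p =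
  op (\big[op/idx]_(p <- F | p == (1,1)%N) f p)
     (op (\big[op/idx]_(p <- F | PL p) f p) (\big[op/idx]_(p <- F | PR p) f p)).
Proof.
move=> /allP Fi.
rewrite (bigID (fun p => p == (1,1)%N)) /=; congr (op _ _).
rewrite (bigID PL) /=; congr (op _ _).
  rewrite big_seq_cond [RHS]big_seq_cond; apply: eq_bigl => -[a b] /=.
  case: (boolP ((a, b) \in F)) => //= /Fi; rewrite /inD /PL /= => h.
  apply/idP/idP; [by case/andP | move=> hh; rewrite hh andbT].
  by apply/negP => /eqP [ea _]; move: hh; rewrite ea.
rewrite big_seq_cond [RHS]big_seq_cond; apply: eq_bigl => -[a b] /=.
case: (boolP ((a, b) \in F)) => //= /Fi; rewrite /inD /PL /PR /= => h.
apply/idP/idP.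
  case/andP=> /negP h1 /negP h2; apply/andP; split.
    apply/negP => h3; apply: h1; have a1 : a = 1%N by lia.
    by subst a; move: h; rewrite /= expn0 => hb; apply/eqP; congr pair; lia.
  rewrite ltnNge; apply/negP => h3; apply: h2; apply/andP; split => //.
  apply/negP => h4; apply: h1; have a1 : a = 1%N by lia.
  by subst a; move: h; rewrite /= expn0 => hb; apply/eqP; congr pair; lia.
case/andP => h1 h2; apply/andP; split; first by apply/negP => /eqP [] ; lia.
by apply/negP => /andP [_]; lia.
Qed.

Lemma big_pred1_uniq (F : seq (nat * nat)) (a : nat * nat) (f : nat * nat -> V) :
  uniq F -> \big[op/idx]_(p <- F | p == a) f p = if a \in F then f a else idx.
Proof.
elim: F => [|b F IH] /=; first by rewrite big_nil.
case/andP => bF uF; rewrite big_cons IH // in_cons.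
case: (eqVneq b a) => [eba|ba] /=.
  by subst b; rewrite (negbTE bF) Monoid.mulm1.
by [].
Qed.

Lemma bigL (F : seq (nat * nat)) (f : nat * nat -> V) :
  \big[op/idx]_(p <- F | PL p) f p = \big[op/idx]_(q <- LF F) f (q.1.+1, q.2).
Proof.
rewrite -big_filter /LF big_map; apply: eq_big_seq => -[a b].
rewrite mem_filter /PL /Lmap /= => /andP[/andP[h _] _].
by rewrite prednK //; lia.
Qed.

Lemma bigR (F : seq (nat * nat)) (f : nat * nat -> V) :
  \big[op/idx]_(p <- F | PR p) f p =
  \big[op/idx]_(q <- RF F) f (q.1.+1, q.2 + 2 ^ (q.1 - 1)).
Proof.
rewrite -big_filter /RF big_map; apply: eq_big_seq => -[a b].
rewrite mem_filter /PR /Rmap /= => /andP[/andP[h1 h2] _].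
rewrite prednK; last lia.
have -> : (a.-1 - 1 = a - 2)%N by lia.
by rewrite subnK // ltnW.
Qed.

End BigSplit.

Lemma count_sum (T : Type) (a : pred T) (s : seq T) :
  count a s = (\sum_(x <- s) (a x : nat))%N.
Proof. by elim: s => [|x s IH]; rewrite ?big_nil ?big_cons //= IH. Qed.

Lemma LF_uniq F : uniq F -> uniq (LF F).
Proof.
move=> uF; rewrite /LF map_inj_in_uniq ?filter_uniq // => -[a b] [c d].
rewrite !mem_filter /PL /Lmap /= => /andP[/andP[h1 _] _] /andP[/andP[h2 _] _] [e1 e2].
by congr pair => //; lia.
Qed.

Lemma RF_uniq F : uniq F -> uniq (RF F).
Proof.
move=> uF; rewrite /RF map_inj_in_uniq ?filter_uniq // => -[a b] [c d].
rewrite !mem_filter /PR /Rmap /= => /andP[/andP[h1 h3] _] /andP[/andP[h2 h4] _] [e1 e2].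
have ac : a = c by lia.
subst c; congr pair; lia.
Qed.

Lemma LF_inD F : all inD F -> all inD (LF F).
Proof.
move=> /allP Fi; apply/allP => q /mapP [[a b]].
rewrite mem_filter /PL /Lmap /= => /andP[/andP[h1 h2] /Fi]; rewrite /inD /= => h3 ->.
rewrite /= (_ : (a.-1 - 1 = a - 2)%N); last lia.
apply/andP; split; first lia.
by apply/andP; split => //; case/andP: h3 => _ /andP[].
Qed.

Lemma RF_inD F : all inD F -> all inD (RF F).
Proof.
move=> /allP Fi; apply/allP => q /mapP [[a b]].
rewrite mem_filter /PR /Rmap /= => /andP[/andP[h1 h2] /Fi]; rewrite /inD /= => h3 ->.
rewrite /= (_ : (a.-1 - 1 = a - 2)%N); last lia.
case/andP: h3 => _ /andP[_ h4].
have e : (2 ^ (a - 1) = 2 * 2 ^ (a - 2))%N by rewrite -expnS; congr expn; lia.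
rewrite e in h4.
apply/andP; split; first lia.
apply/andP; split; lia.
Qed.

Lemma LF_level F d : (forall p, p \in F -> p.1 <= d.+1)%N ->
  (forall q, q \in LF F -> q.1 <= d)%N.
Proof.
move=> h q /mapP [[a b]]; rewrite mem_filter => /andP[_ /h /=] ha -> /=; lia.
Qed.

Lemma RF_level F d : (forall p, p \in F -> p.1 <= d.+1)%N ->
  (forall q, q \in RF F -> q.1 <= d)%N.
Proof.
move=> h q /mapP [[a b]]; rewrite mem_filter => /andP[_ /h /=] ha -> /=; lia.
Qed.

Section Branch.
Variable R : realType.
Local Open Scope ring_scope.

Lemma in_branch11_half (s : R) : 0 <= s < 1 -> in_branch (s / 2) (1, 1)%N.
Proof.
move=> /andP[s0 s1]; rewrite /in_branch /inD /in_dyadic /= expr0 !divr1 subrr.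
apply/andP; split; [lra|lra].
Qed.

Lemma in_branch11_half1 (s : R) : 0 <= s < 1 -> in_branch ((s + 1) / 2) (1, 1)%N.
Proof.
move=> /andP[s0 s1]; rewrite /in_branch /inD /in_dyadic /= expr0 !divr1 subrr.
apply/andP; split; [lra|lra].
Qed.

Lemma in_branch_L (s : R) p : 0 <= s < 1 -> inD p -> PL p ->
  in_branch (s / 2) p = in_branch s (Lmap p).
Proof.
case: p => a b /andP[s0 s1]; rewrite /inD /PL /Lmap /in_branch /inD /= => h1 /andP[h2 h3].
case: a h1 h2 h3 => [|[|a]] // h1 h2 h3.
rewrite /= !subSS !subn0 in h3 *.
rewrite in_dyadic_half; congr andb; move: h1 h3; rewrite /= subSS subn0 expnS; lia.
Qed.

Lemma in_branch_LR (s : R) p : 0 <= s < 1 -> PR p ->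
  in_branch (s / 2) p = false.
Proof.
case: p => a b /andP[s0 s1]; rewrite /PR /in_branch /= => /andP[h2 h3].
case: a h2 h3 => [|[|a]] // h2 h3.
rewrite /= !subSS !subn0 in h3 *.
by rewrite in_dyadic_half in_dyadic_big // andbF.
Qed.

Lemma in_branch_R (s : R) p : 0 <= s < 1 -> inD p -> PR p ->
  in_branch ((s + 1) / 2) p = in_branch s (Rmap p).
Proof.
case: p => a b /andP[s0 s1]; rewrite /inD /PR /Rmap /in_branch /inD /= => h1 /andP[h2 h3].
case: a h1 h2 h3 => [|[|a]] // h1 h2 h3.
rewrite /= !subSS !subn0 in h3 h1 *.
have -> : b = ((b - 2 ^ a) + 2 ^ a)%N by rewrite subnK // ltnW.
rewrite addnK in_dyadic_half1; congr andb; move: h1 h3; rewrite expnS; lia.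
Qed.

Lemma in_branch_RL (s : R) p : 0 <= s < 1 -> PL p ->
  in_branch ((s + 1) / 2) p = false.
Proof.
case: p => a b /andP[s0 s1]; rewrite /PL /in_branch /= => /andP[h2 h3].
case: a h2 h3 => [|[|a]] // h2 h3.
rewrite /= !subSS !subn0 in h3 *.
by rewrite in_dyadic_small1 // andbF.
Qed.

End Branch.

End Part3.

Section Part4.


Lemma split3s (V : nmodType) (F : seq (nat * nat)) (f : nat * nat -> V) : all inD F ->
  \sum_(p <- F) f p =
  \sum_(p <- F | p == (1,1)%N) f p + (\sum_(p <- F | PL p) f p + \sum_(p <- F | PR p) f p).
Proof. by move=> Fi; rewrite (split3 _ _ Fi). Qed.

Lemma pred1s (V : nmodType) (F : seq (nat * nat)) a (f : nat * nat -> V) : uniq F ->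
  \sum_(p <- F | p == a) f p = if a \in F then f a else 0.
Proof. by move=> uF; rewrite (big_pred1_uniq _ _ _ uF). Qed.

Section Main.
Variables (R : realType) (X Y : normedModType R) (T : {linear X -> Y}).

Definition G (F : seq (nat * nat)) (x : nat * nat -> X) (v : Y) (t : R) : Y :=
  v + \sum_(p <- F) haar p.1 p.2 t *: T (x p).
Definition A (N : nat) F x v : R :=
  (\sum_(i < 2 ^ N) `|G F x v (i%:R / 2 ^+ N)| ^+ 2) / 2 ^+ N.
Definition nrm (F : seq (nat * nat)) (x : nat * nat -> X) : R :=
  \sum_(p <- F) `|x p| ^+ 2.
Definition xL (x : nat * nat -> X) (q : nat * nat) : X := Num.sqrt 2 *: x (q.1.+1, q.2).
Definition xR (x : nat * nat -> X) (q : nat * nat) : X :=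
  Num.sqrt 2 *: x (q.1.+1, (q.2 + 2 ^ (q.1 - 1))%N).
Definition b0 (F : seq (nat * nat)) (x : nat * nat -> X) : Y :=
  if (1, 1)%N \in F then T (x (1, 1)%N) else 0.

Lemma LF_pos F q : all inD F -> q \in LF F -> (0 < q.1)%N /\ (0 < q.2)%N.
Proof. by move=> Fi /(allP (LF_inD Fi)); rewrite /inD => /and3P[? ? _]. Qed.
Lemma RF_pos F q : all inD F -> q \in RF F -> (0 < q.1)%N /\ (0 < q.2)%N.
Proof. by move=> Fi /(allP (RF_inD Fi)); rewrite /inD => /and3P[? ? _]. Qed.

Lemma G_left F x v (s : R) : uniq F -> all inD F -> 0 <= s < 1 ->
  G F x v (s / 2) = G (LF F) (xL x) (v + b0 F x) s.
Proof.
move=> uF Fi hs; rewrite /G (split3s _ Fi) pred1s // bigL bigR.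
rewrite [X in _ + (_ + X)]big1_seq ?addr0; last first.
  move=> [a b] /andP[_ /(RF_pos Fi) [/= a0 b0]].
  case: a a0 => // a _; rewrite haar_half haar_big ?mulr0 ?scale0r //.
    by rewrite subSS subn0; lia.
  by case/andP: hs.
rewrite addrA; congr (_ + _ + _).
  by rewrite /b0; case: ifP => _ //; rewrite haar11_half // scale1r.
apply: eq_big_seq => -[a b] /(LF_pos Fi) [/= a0 _].
case: a a0 => // a _; rewrite haar_half /xL linearZ /= scalerA mulrC //.
Qed.

Lemma G_right F x v (s : R) : uniq F -> all inD F -> 0 <= s < 1 ->
  G F x v ((s + 1) / 2) = G (RF F) (xR x) (v - b0 F x) s.
Proof.
move=> uF Fi hs; rewrite /G (split3s _ Fi) pred1s // bigL bigR.
rewrite [X in _ + (_ + (X + _))]big1_seq ?add0r; last first.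
  move=> [a b] /andP[_ /mapP [[c d]]].
  rewrite mem_filter /PL /Lmap /= => /andP[/andP[c1 d1] _] [-> ->].
  case: c c1 d1 => [|[|c]] // _ d1.
  rewrite /= haar_small1 ?scale0r //.
    by move: d1; rewrite ?subSS ?subn0.
  by case/andP: hs.
rewrite addrA; congr (_ + _ + _).
  rewrite /b0; case: ifP => _ //; last by rewrite ?subr0 ?oppr0.
  by rewrite haar11_half1 // scaleN1r.
apply: eq_big_seq => -[a b] /(RF_pos Fi) [/= a0 b0].
case: a a0 => // a _; rewrite subSS subn0 haar_half1 // /xR linearZ /= scalerA mulrC.
by rewrite subSS subn0.
Qed.

Lemma atom_in (N : nat) (i : 'I_(2 ^ N)) : 0 <= (i%:R / 2 ^+ N : R) < 1.
Proof.
have p := two_pow_gt0 R N.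
rewrite divr_ge0 ?ler0n ?(ltW p) //= ltr_pdivrMr // mul1r -natrX ltr_nat.
exact: ltn_ord.
Qed.

Lemma A_split N F x v : uniq F -> all inD F ->
  A N.+1 F x v = (A N (LF F) (xL x) (v + b0 F x) + A N (RF F) (xR x) (v - b0 F x)) / 2.
Proof.
move=> uF Fi; rewrite /A.
have e : (2 ^ N.+1 = 2 ^ N + 2 ^ N)%N by rewrite expnS mul2n addnn.
rewrite e big_split_ord /=.
have p := two_pow_gt0 R N.
have -> : \sum_(i < 2 ^ N) `|G F x v ((lshift (2 ^ N) i)%:R / 2 ^+ N.+1)| ^+ 2 =
          \sum_(i < 2 ^ N) `|G (LF F) (xL x) (v + b0 F x) (i%:R / 2 ^+ N)| ^+ 2.
  apply: eq_bigr => i _; rewrite -G_left //; last exact: atom_in.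
  by congr (`|G _ _ _ _| ^+ 2); rewrite /= exprS; field; rewrite gt_eqF.
have -> : \sum_(i < 2 ^ N) `|G F x v ((rshift (2 ^ N) i)%:R / 2 ^+ N.+1)| ^+ 2 =
          \sum_(i < 2 ^ N) `|G (RF F) (xR x) (v - b0 F x) (i%:R / 2 ^+ N)| ^+ 2.
  apply: eq_bigr => i _; rewrite -G_right //; last exact: atom_in.
  by congr (`|G _ _ _ _| ^+ 2); rewrite /= natrD natrX exprS; field; rewrite gt_eqF.
by rewrite exprS; field; rewrite gt_eqF.
Qed.

Lemma norm_sqrt2 (y : X) : `|Num.sqrt 2 *: y| ^+ 2 = 2 * `|y| ^+ 2.
Proof.
by rewrite normrZ exprMn ger0_norm ?sqrtr_ge0 // sqr_sqrtr.
Qed.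

Lemma nrm_split F x : uniq F -> all inD F ->
  nrm F x = (if (1, 1)%N \in F then `|x (1, 1)%N| ^+ 2 else 0) +
            (nrm (LF F) (xL x) + nrm (RF F) (xR x)) / 2.
Proof.
move=> uF Fi; rewrite /nrm (split3s _ Fi) pred1s // bigL bigR; congr (_ + _).
rewrite mulrDl !mulr_suml; congr (_ + _); apply: eq_bigr => q _;
  by rewrite /xL /xR norm_sqrt2 mulrC mulrA mulVf ?mul1r.
Qed.

Lemma A_eqx N F x x' v : {in F, x =1 x'} -> A N F x v = A N F x' v.
Proof.
move=> h; rewrite /A; congr (_ / _); apply: eq_bigr => i _; rewrite /G.
by congr (`|_ + _| ^+ 2); apply: eq_big_seq => p /h ->.
Qed.

Lemma A_perm N F F' x v : perm_eq F F' -> A N F x v = A N F' x v.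
Proof.
move=> h; rewrite /A; congr (_ / _); apply: eq_bigr => i _; rewrite /G.
by rewrite (perm_big _ h).
Qed.

Lemma nrm_eqx F x x' : {in F, x =1 x'} -> nrm F x = nrm F x'.
Proof. by move=> h; rewrite /nrm; apply: eq_big_seq => p /h ->. Qed.

Lemma nrm_perm F F' x : perm_eq F F' -> nrm F x = nrm F' x.
Proof. by move=> h; rewrite /nrm (perm_big _ h). Qed.

End Main.

End Part4.

Section Part5.
Local Open Scope nat_scope.


Lemma mem_Dmn m n p : (p \in Dmn m n) = (m <= p.1 <= n) && (1 <= p.2 <= 2 ^ (p.1 - 1)).
Proof.
case: p => k j /=; apply/idP/idP.
  move/flattenP => [s /mapP [k' hk ->] /mapP [j' hj [-> ->]]].
  move: hk hj; rewrite !mem_iota; lia.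
move=> h; apply/flattenP; exists [seq (k, j0) | j0 <- iota 1 (2 ^ (k - 1))].
  by apply/mapP; exists k => //; rewrite mem_iota; lia.
by apply/mapP; exists j => //; rewrite mem_iota; lia.
Qed.

Lemma Dmn_uniq m n : uniq (Dmn m n).
Proof.
rewrite /Dmn; apply: allpairs_uniq_dep.
- exact: iota_uniq.
- by move=> k _; exact: iota_uniq.
by move=> [k1 j1] [k2 j2] _ _ /= [e1 e2]; subst k2; rewrite /= in e2 *; subst j2.
Qed.

Lemma Dmn_inD n : all inD (Dmn 1 n).
Proof. by apply/allP => -[k j]; rewrite mem_Dmn /inD /=; lia. Qed.

Lemma Dmn_11 n : (1, 1) \in Dmn 1 n.+1.
Proof. by rewrite mem_Dmn /= expn0; lia. Qed.

Lemma Dmn_LF n : perm_eq (LF (Dmn 1 n.+1)) (Dmn 1 n).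
Proof.
apply: uniq_perm; [exact/LF_uniq/Dmn_uniq | exact: Dmn_uniq |] => -[k j].
rewrite mem_Dmn /=; apply/idP/idP.
  move/mapP => [[a b]]; rewrite mem_filter mem_Dmn /PL /Lmap /= => /andP[/andP[h1 h2] h3] [-> ->].
  move: h2 h3; case: a h1 => [|[|a]] // _; rewrite /= !subSS !subn0 expnS; lia.
move=> h; apply/mapP; exists (k.+1, j); last by [].
rewrite mem_filter mem_Dmn /PL /=; move: h; case: k => [|k] //=; rewrite !subSS !subn0 expnS; lia.
Qed.

Lemma Dmn_RF n : perm_eq (RF (Dmn 1 n.+1)) (Dmn 1 n).
Proof.
apply: uniq_perm; [exact/RF_uniq/Dmn_uniq | exact: Dmn_uniq |] => -[k j].
rewrite mem_Dmn /=; apply/idP/idP.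
  move/mapP => [[a b]]; rewrite mem_filter mem_Dmn /PR /Rmap /= => /andP[/andP[h1 h2] h3] [-> ->].
  move: h2 h3; case: a h1 => [|[|a]] // _; rewrite /= !subSS !subn0 expnS; lia.
move=> h; apply/mapP; exists (k.+1, (j + 2 ^ k.-1)%N); last first.
  by rewrite /Rmap /=; congr pair; rewrite ?subSS ?subn0 ?subn1 /=; lia.
rewrite mem_filter mem_Dmn /PR /=; move: h; case: k => [|k] //=; rewrite !subSS !subn0 !expnS; lia.
Qed.

Lemma split3n (F : seq (nat * nat)) (f : nat * nat -> nat) : all inD F ->
  (\sum_(p <- F) f p =
  \sum_(p <- F | p == (1,1)) f p + (\sum_(p <- F | PL p) f p + \sum_(p <- F | PR p) f p))%N.
Proof. by move=> Fi; rewrite (split3 _ _ Fi). Qed.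

Lemma pred1n (F : seq (nat * nat)) a (f : nat * nat -> nat) : uniq F ->
  (\sum_(p <- F | p == a) f p)%N = if a \in F then f a else 0%N.
Proof. by move=> uF; rewrite (big_pred1_uniq _ _ _ uF). Qed.

Section Count.
Variable R : realType.
Local Open Scope ring_scope.

Lemma count_left (F : seq (nat * nat)) (s : R) : uniq F -> all inD F -> 0 <= s < 1 ->
  count (in_branch (s / 2)) F = (((1, 1)%N \in F) + count (in_branch s) (LF F))%N.
Proof.
move=> uF Fi hs; rewrite !count_sum (split3n _ Fi) pred1n //.
rewrite [X in (_ + (_ + X))%N]big1_seq; last first.
  by move=> p /andP[hp _]; rewrite in_branch_LR.
rewrite addn0; congr addn; first by case: ifP => //; rewrite in_branch11_half.
rewrite /LF big_map big_filter big_seq_cond [RHS]big_seq_cond.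
apply: eq_bigr => p /andP[pF hp].
by rewrite in_branch_L //; exact: (allP Fi).
Qed.

Lemma count_right (F : seq (nat * nat)) (s : R) : uniq F -> all inD F -> 0 <= s < 1 ->
  count (in_branch ((s + 1) / 2)) F = (((1, 1)%N \in F) + count (in_branch s) (RF F))%N.
Proof.
move=> uF Fi hs; rewrite !count_sum (split3n _ Fi) pred1n //.
rewrite [X in (_ + (X + _))%N]big1_seq; last first.
  by move=> p /andP[hp _]; rewrite in_branch_RL.
rewrite add0n; congr addn; first by case: ifP => //; rewrite in_branch11_half1.
rewrite /RF big_map big_filter big_seq_cond [RHS]big_seq_cond.
apply: eq_bigr => p /andP[pF hp].
by rewrite in_branch_R //; exact: (allP Fi).
Qed.

End Count.

End Part5.

Section Part6.


Section Core.
Variables (R : realType) (X Y : normedModType R) (T : {linear X -> Y}).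

Definition comb (y : X) (a b : nat * nat -> X) (q : nat * nat) : X :=
  if q.1 == 1%N then y
  else if (q.2 <= 2 ^ (q.1 - 2))%N then (Num.sqrt (2 : R))^-1 *: a (q.1.-1, q.2)
  else (Num.sqrt (2 : R))^-1 *: b (q.1.-1, (q.2 - 2 ^ (q.1 - 2))%N).

Lemma sqrt2_neq0 : Num.sqrt (2 : R) != 0.
Proof. by rewrite sqrtr_eq0 -ltNge. Qed.

Lemma comb_L n y a b : {in Dmn 1 n, xL (comb y a b) =1 a}.
Proof.
move=> [k j]; rewrite mem_Dmn /xL /comb /= => h.
case: k h => [|k] //=; rewrite ?subSS ?subn0 => h.
have -> : (j <= 2 ^ k)%N by lia.
by rewrite scalerA divff ?sqrt2_neq0 // scale1r.
Qed.

Lemma comb_R n y a b : {in Dmn 1 n, xR (comb y a b) =1 b}.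
Proof.
move=> [k j]; rewrite mem_Dmn /xR /comb /= => h.
case: k h => [|k] //=; rewrite ?subSS ?subn0 => h.
have -> : (j + 2 ^ k <= 2 ^ k)%N = false by lia.
by rewrite addnK scalerA divff ?sqrt2_neq0 // scale1r.
Qed.

Lemma A_D n y a b v :
  A T n.+1 (Dmn 1 n.+1) (comb y a b) v =
  (A T n (Dmn 1 n) a (v + T y) + A T n (Dmn 1 n) b (v - T y)) / 2.
Proof.
rewrite A_split ?Dmn_uniq ?Dmn_inD //.
rewrite /b0 Dmn_11 {3 4}/comb /=.
rewrite (A_perm _ _ _ _ (Dmn_LF n)) (A_perm _ _ _ _ (Dmn_RF n)).
by rewrite (A_eqx _ _ _ (@comb_L n y a b)) (A_eqx _ _ _ (@comb_R n y a b)).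
Qed.

Lemma nrm_D n y a b :
  nrm (Dmn 1 n.+1) (comb y a b) = `|y| ^+ 2 + (nrm (Dmn 1 n) a + nrm (Dmn 1 n) b) / 2.
Proof.
rewrite nrm_split ?Dmn_uniq ?Dmn_inD // Dmn_11 {1}/comb /=.
rewrite (nrm_perm _ (Dmn_LF n)) (nrm_perm _ (Dmn_RF n)).
by rewrite (nrm_eqx (@comb_L n y a b)) (nrm_eqx (@comb_R n y a b)).
Qed.

Lemma mix (I J : Type) (s : seq I) (t : seq J) (al : I -> R) (be : J -> R)
  (P : I -> R) (Q : J -> R) :
  \sum_(i <- s) al i = 1 -> \sum_(j <- t) be j = 1 ->
  \sum_(i <- s) \sum_(j <- t) (al i * be j) * ((P i + Q j) / 2) =
  (\sum_(i <- s) al i * P i + \sum_(j <- t) be j * Q j) / 2.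
Proof.
move=> ha hb.
have e : forall i j, al i * be j * ((P i + Q j) / 2) =
   al i * P i / 2 * be j + al i * (be j * Q j / 2) by move=> i j; ring.
transitivity (\sum_(i <- s) (al i * P i / 2 + al i * \sum_(j <- t) (be j * Q j / 2))).
  apply: eq_bigr => i _; under eq_bigr do rewrite e.
  by rewrite big_split /= -!mulr_sumr hb mulr1.
rewrite big_split /= -mulr_suml -[X in _ + X]mulr_suml ha mul1r.
by rewrite mulrDl -mulr_suml.
Qed.

Lemma sum_allpairs (I J : Type) (s : seq I) (t : seq J) (f : I * J -> R) :
  \sum_(ab <- [seq (a, b) | a <- s, b <- t]) f ab = \sum_(a <- s) \sum_(b <- t) f (a, b).
Proof. by rewrite big_allpairs. Qed.

Lemma core d : forall n F x, uniq F -> all inD F -> (forall p, p \in F -> p.1 <= d)%N ->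
  (forall s : R, 0 <= s < 1 -> (count (in_branch s) F <= n)%N) ->
  exists fam : seq (R * (nat * nat -> X)),
    [/\ all (fun a => 0 <= a.1) fam, \sum_(a <- fam) a.1 = 1,
        (forall v, A T d F x v = \sum_(a <- fam) a.1 * A T n (Dmn 1 n) a.2 v) &
        nrm F x = \sum_(a <- fam) a.1 * nrm (Dmn 1 n) a.2].
Proof.
elim: d => [|d IH] n F x uF Fi Fd Fc.
  have -> : F = [::].
    case: F uF Fi Fd Fc => [|p F] //= _ /andP[pi _] Fd _.
    by have := Fd p (mem_head _ _); move: pi; rewrite /inD; lia.
  exists [:: (1, fun _ => 0)]; split.
  - by rewrite /= andbT ler01.
  - by rewrite big_seq1.
  - move=> v; rewrite big_seq1 mul1r /A /G expn0 expr0 big_ord1 big_nil addr0 divr1.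
    have -> : \sum_(i < 2 ^ n) `|v + \sum_(p <- Dmn 1 n) haar p.1 p.2 (i%:R / 2 ^+ n) *:
         T ((fun _ : nat * nat => 0 : X) p)| ^+ 2 = \sum_(i < 2 ^ n) `|v| ^+ 2.
      apply: eq_bigr => i _; rewrite big1 ?addr0 // => p _.
      by rewrite linear0 scaler0.
    rewrite sumr_const card_ord -[_ *+ _]mulr_natr natrX.
    by field; rewrite gt_eqF // two_pow_gt0.
  - rewrite big_seq1 mul1r /nrm big_nil big1 // => p _.
    by rewrite normr0 expr0n.
have hh : forall s : R, 0 <= s < 1 -> (0 <= s / 2 < 1) /\ (0 <= (s + 1) / 2 < 1).
  by move=> s /andP[s0 s1]; split; apply/andP; split; lra.
have dL := LF_level Fd; have dR := RF_level Fd.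
have uL := LF_uniq uF; have uR := RF_uniq uF.
have iL := LF_inD Fi; have iR := RF_inD Fi.
case h11 : ((1, 1)%N \in F).
  case: n Fc => [|n] Fc.
    have h0 : 0 <= (0 : R) < 1 by rewrite lexx ltr01.
    have := Fc _ (hh _ h0).1; rewrite count_left // h11 //.
  have cL : forall s : R, 0 <= s < 1 -> (count (in_branch s) (LF F) <= n)%N.
    by move=> s hs; have := Fc _ (hh _ hs).1; rewrite count_left // h11.
  have cR : forall s : R, 0 <= s < 1 -> (count (in_branch s) (RF F) <= n)%N.
    by move=> s hs; have := Fc _ (hh _ hs).2; rewrite count_right // h11.
  have [famL [L1 L2 L3 L4]] := IH n _ (xL x) uL iL dL cL.
  have [famR [R1 R2 R3 R4]] := IH n _ (xR x) uR iR dR cR.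
  exists (map (fun ab => (ab.1.1 * ab.2.1, comb (x (1, 1)%N) ab.1.2 ab.2.2))
              [seq (a, b) | a <- famL, b <- famR]); split.
  - apply/allP => z /mapP [[a b] /allpairsP [[a' b'] [ha hb [-> ->]]] ->] /=.
    by rewrite mulr_ge0 //; [exact: (allP L1) | exact: (allP R1)].
  - rewrite big_map sum_allpairs /= -[RHS]L2; apply: eq_bigr => a _.
    by rewrite -mulr_sumr R2 mulr1.
  - move=> v; rewrite A_split // /b0 h11 L3 R3 big_map sum_allpairs /=.
    under [RHS]eq_bigr do under eq_bigr do rewrite A_D.
    by rewrite (mix (fun a => A T n (Dmn 1 n) a.2 (v + T (x (1, 1)%N)))
                     (fun b => A T n (Dmn 1 n) b.2 (v - T (x (1, 1)%N))) L2 R2).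
  - rewrite nrm_split // h11 L4 R4 big_map sum_allpairs /=.
    set c := `|x (1, 1)%N| ^+ 2.
    have ee : forall P Q : R, c + (P + Q) / 2 = ((P + c) + (Q + c)) / 2.
      by move=> P Q; field.
    under [RHS]eq_bigr do under eq_bigr do rewrite nrm_D -/c ee.
    rewrite (mix (fun a => nrm (Dmn 1 n) a.2 + c) (fun b => nrm (Dmn 1 n) b.2 + c) L2 R2).
    have e : forall (I : Type) (s : seq I) (al : I -> R) (P : I -> R),
        \sum_(i <- s) al i = 1 -> \sum_(i <- s) al i * (P i + c) = \sum_(i <- s) al i * P i + c.
      move=> I s al P hs; under eq_bigr do rewrite mulrDr.
      by rewrite big_split /= -mulr_suml hs mul1r.
    rewrite (e _ _ _ _ L2) (e _ _ _ _ R2).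
    by field.
have cL : forall s : R, 0 <= s < 1 -> (count (in_branch s) (LF F) <= n)%N.
  by move=> s hs; have := Fc _ (hh _ hs).1; rewrite count_left // h11.
have cR : forall s : R, 0 <= s < 1 -> (count (in_branch s) (RF F) <= n)%N.
  by move=> s hs; have := Fc _ (hh _ hs).2; rewrite count_right // h11.
have [famL [L1 L2 L3 L4]] := IH n _ (xL x) uL iL dL cL.
have [famR [R1 R2 R3 R4]] := IH n _ (xR x) uR iR dR cR.
exists ([seq (a.1 / 2, a.2) | a <- famL] ++ [seq (b.1 / 2, b.2) | b <- famR]); split.
- rewrite all_cat !all_map; apply/andP; split; apply/allP => a ha /=;
    rewrite divr_ge0 //; [exact: (allP L1) | exact: (allP R1)].
- by rewrite big_cat !big_map /= -!mulr_suml L2 R2; field.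
- move=> v; rewrite A_split // /b0 h11 addr0 subr0 L3 R3 big_cat !big_map /=.
  by rewrite mulrDl !mulr_suml; congr (_ + _); apply: eq_bigr => a _; rewrite mulrAC.
- rewrite nrm_split // h11 add0r L4 R4 big_cat !big_map /=.
  by rewrite mulrDl !mulr_suml; congr (_ + _); apply: eq_bigr => a _; rewrite mulrAC.
Qed.

End Core.

End Part6.

Section Part7.
Local Open Scope classical_set_scope.
Local Open Scope ring_scope.


Section Integ.
Variable R : realType.

Definition atom (N i : nat) : set R := `[i%:R / 2 ^+ N, i.+1%:R / 2 ^+ N[.

Lemma atomP N i (t : R) : atom N i t <-> i%:R / 2 ^+ N <= t /\ t < i.+1%:R / 2 ^+ N.
Proof. by rewrite /atom /= in_itv /=; split => [/andP[]|[-> ->]]. Qed.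

Lemma bigsetU_mem (s : seq nat) (F : nat -> set R) t :
  (\big[setU/set0]_(i <- s) F i) t <-> exists2 i, i \in s & F i t.
Proof.
elim: s => [|a s IH]; first by rewrite big_nil; split => // -[].
rewrite big_cons; split.
  case => [h|/IH [i hi h]]; first by exists a => //; rewrite mem_head.
  by exists i => //; rewrite in_cons hi orbT.
move=> [i]; rewrite in_cons => /orP[/eqP -> h|hi h]; first by left.
by right; apply/IH; exists i.
Qed.

Lemma atom_cover N : `[0%R, 1%R[%classic = \big[setU/set0]_(i <- index_iota 0 (2 ^ N)) atom N i.
Proof.
have p := two_pow_gt0 R N.
apply/seteqP; split => t.
  rewrite /= in_itv /= => /andP[t0 t1]; apply/bigsetU_mem.
  have t2 : 0 <= t * 2 ^+ N by rewrite mulr_ge0 // ltW.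
  have /andP[h1 h2] := Num.Theory.truncn_itv t2.
  exists (Num.truncn (t * 2 ^+ N)).
    rewrite mem_iota add0n subn0 leq0n /= -(ltr_nat R) natrX.
    by apply: (le_lt_trans h1); rewrite -[X in _ < X]mul1r ltr_pM2r.
  apply/atomP; split.
    by rewrite ler_pdivrMr.
  by rewrite ltr_pdivlMr.
move/bigsetU_mem => [i]; rewrite mem_iota add0n subn0 => /andP[_ hi] /atomP [h1 h2].
rewrite /= in_itv /=; apply/andP; split.
  by apply: le_trans h1; rewrite divr_ge0 // ltW.
apply: (lt_le_trans h2); rewrite ler_pdivrMr // mul1r -natrX ler_nat //.
Qed.

Lemma atom_disj N : trivIset [set` index_iota 0 (2 ^ N)] (@atom N).
Proof.
move=> i j _ _ [t [/atomP [a1 a2] /atomP [b1 b2]]].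
have := atom_le i b1 b2; rewrite a1 => /esym hij.
have := atom_le j a1 a2; rewrite b1 => /esym hji.
by apply/eqP; rewrite eqn_leq hij hji.
Qed.

Lemma atom_meas N i : measurable (atom N i).
Proof. exact: measurable_itv. Qed.

Lemma atom_measure N i : lebesgue_measure (atom N i) = (1 / 2 ^+ N)%:E.
Proof.
rewrite /atom lebesgue_measure_itv /= lte_fin.
have p := two_pow_gt0 R N.
rewrite ltr_pM2r ?invr_gt0 // ltr_nat ltnSn -EFinB; congr EFin.
by rewrite -natr1; field; rewrite gt_eqF.
Qed.

Lemma int_step (N : nat) (g : R -> R) : (forall t, 0 <= g t) ->
  (forall i t, i%:R / 2 ^+ N <= t -> t < i.+1%:R / 2 ^+ N -> g t = g (i%:R / 2 ^+ N)) ->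
  (\int[@lebesgue_measure R]_(t in `[0%R, 1%R[) (g t)%:E =
   ((\sum_(i < 2 ^ N) g (i%:R / 2 ^+ N)) / 2 ^+ N)%:E)%E.
Proof.
move=> g0 gc; have p := two_pow_gt0 R N.
rewrite (atom_cover N) ge0_integral_bigsetU //.
- rewrite (eq_bigr (fun i => ((g (i%:R / 2 ^+ N)) / 2 ^+ N)%:E)).
    by rewrite sumEFin big_mkord mulr_suml.
  move=> i _; rewrite (eq_integral (fun=> (g (i%:R / 2 ^+ N))%:E)).
    rewrite integral_cst; last exact: atom_meas.
    transitivity ((g (i%:R / 2 ^+ N))%:E * (1 / 2 ^+ N)%:E)%E.
      by congr mule; exact: atom_measure.
    by rewrite -EFinM mul1r.
  by move=> t; rewrite inE => /atomP [h1 h2]; rewrite (gc _ _ h1 h2).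
- exact: atom_meas.
- exact: iota_uniq.
- exact: atom_disj.
- elim: (index_iota 0 (2 ^ N)) => [|a s IH].
    by rewrite big_nil; exact: measurable_fun_set0.
  rewrite big_cons; apply/measurable_funU; [exact: atom_meas| |split => //].
    apply: bigsetU_measurable => i _; exact: atom_meas.
  move=> mD B mB.
  rewrite (_ : _ `&` _ = atom N a `&` (cst (g (a%:R / 2 ^+ N))%:E) @^-1` B).
    by rewrite preimage_cst; case: ifPn => _; rewrite ?setIT ?setI0.
  apply/seteqP; split => t [/[dup] ht /atomP [h1 h2]] /=; rewrite (gc _ _ h1 h2) //.
- by move=> t _; rewrite lee_fin.
Qed.

End Integ.

End Part7.

Section Part8.
Local Open Scope classical_set_scope.
Local Open Scope ring_scope.


Section Fin.
Variables (R : realType) (X Y : normedModType R) (T : {linear X -> Y}).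

Lemma L2_A F x N : (forall p, p \in F -> p.1 <= N)%N ->
  L2norm (haar_sum T F x) = Num.sqrt (A T N F x 0).
Proof.
move=> Fd; rewrite /L2norm (@int_step R N (fun t => `|haar_sum T F x t| ^+ 2)) /=.
- rewrite /A; congr (Num.sqrt (_ / _)); apply: eq_bigr => i _.
  by rewrite /G add0r.
- by move=> t; rewrite exprn_ge0.
move=> i t h1 h2; congr (`|_| ^+ 2); rewrite /haar_sum; apply: eq_big_seq => p pF.
by rewrite (haar_const p.2 (Fd p pF) h1 h2).
Qed.

Lemma A_ge0 N F x v : 0 <= A T N F x v.
Proof.
apply: divr_ge0; first by apply: sumr_ge0 => i _; rewrite exprn_ge0.
by rewrite ltW // two_pow_gt0.
Qed.

End Fin.


End Part8.

Unset Implicit Arguments.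

Theorem theorem3p10 (R : realType) (F : seq (nat * nat)) (n : nat)
  (X Y : completeNormedModType R) (T : {linear X -> Y}) :
  uniq F -> all (@inD) F -> local_height_eq R F n ->
  (exists M : R, forall x : X, `|T x| <= M * `|x|) ->
  (tau T F <= tau T (Dmn 1 n))%E.
Proof.
move=> uF Fi [_ Fc] _.
rewrite /tau; apply: le_ereal_inf_tmp => _ [c [c0 hD] <-].
apply: ereal_inf_lbound; exists c => //; split => // x.
pose d := (\max_(p <- F) p.1)%N.
have Fd : (forall p, p \in F -> p.1 <= d)%N.
  by move=> p pF; exact: (@leq_bigmax_seq _ F xpredT (fun p => p.1)).
have [fam [f1 f2 f3 f4]] := core T x uF Fi Fd Fc.
rewrite (L2_A _ _ Fd) (f3 0) -[nrm _ _]/(\sum_(p <- F) `|x p| ^+ 2) in f4 *.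
rewrite f4.
have key : forall a, a \in fam -> A T n (Dmn 1 n) a.2 0 <= c ^+ 2 * nrm (Dmn 1 n) a.2.
  move=> a _; have := hD a.2.
  rewrite (L2_A _ _ (N := n)); last by move=> p; rewrite mem_Dmn => /andP[/andP[_ ->] _].
  have n0 : 0 <= nrm (Dmn 1 n) a.2 by apply: sumr_ge0 => p _; rewrite exprn_ge0.
  move=> h; rewrite -ler_sqrt ?mulr_ge0 ?exprn_ge0 //.
  by rewrite [X in _ <= X]sqrtrM ?sqr_ge0 // sqrtr_sqr ger0_norm.
have le1 : \sum_(a <- fam) a.1 * A T n (Dmn 1 n) a.2 0 <=
           c ^+ 2 * \sum_(a <- fam) a.1 * nrm (Dmn 1 n) a.2.
  rewrite mulr_sumr big_seq_cond [X in _ <= X]big_seq_cond; apply: ler_sum => a /andP[ha _].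
  rewrite [X in _ <= X]mulrCA; apply: ler_wpM2l; first exact: (allP f1).
  exact: key.
apply: (le_trans (ler_wsqrtr le1)).
by rewrite sqrtrM ?sqr_ge0 // sqrtr_sqr ger0_norm.
Qed.
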